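(* Let $\zeta_1\in\mathbb{C}_+$, $\bar\zeta_1\in\mathbb{C}_-$ and $\omega_1,\bar\omega_1\in\{1,-1\}$. Then: (a) the function $$q(x,t)=2i(\bar\zeta_1-\zeta_1)\frac{\bar\omega_1e^{-2i\bar\zeta_1x-4i\bar\zeta_1^2t}}{1+\omega_1\bar\omega_1e^{-2i(\bar\zeta_1-\zeta_1)x-4i(\bar\zeta_1^2-\zeta_1^2)t}}$$ satisfies the reverse-space-time NLS equation $iq_t(x,t)+q_{xx}(x,t)+2q^2(x,t)q(-x,-t)=0$ wherever the denominator is nonzero; (b) with $V=-2\,\mathrm{Im}(\bar\zeta_1^2-\zeta_1^2)/\mathrm{Im}(\bar\zeta_1-\zeta_1)$, $\beta=2V\,\mathrm{Im}(\bar\zeta_1)+4\,\mathrm{Im}(\bar\zeta_1^2)$ and $\gamma=-2V\,\mathrm{Re}(\bar\zeta_1-\zeta_1)-4\,\mathrm{Re}(\bar\zeta_1^2-\zeta_1^2)$, one has along the line $x=Vt$ $$|q(Vt,t)|=\frac{2|\bar\zeta_1-\zeta_1|\,e^{\beta t}}{\left|1+\omega_1\bar\omega_1e^{i\gamma t}\right|},$$ and $\gamma=4|\zeta_1-\bar\zeta_1|^2\,\mathrm{Im}(\zeta_1+\bar\zeta_1)/\mathrm{Im}(\bar\zeta_1-\zeta_1)$. In particular, if $\mathrm{Im}(\zeta_1+\bar\zeta_1)\neq0$ then $q$ becomes singular (its denominator vanishes) along $x=Vt$ periodically in $t$ with period $2\pi/|\gamma|$.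
   Context: $\mathbb{C}_\pm$ denote the open upper/lower half planes; $\mathrm{Re},\mathrm{Im}$ denote real and imaginary parts. *)

(* Defs.v *)
From Stdlib Require Import Reals Lra ZArith.
Open Scope R_scope.

Record Cx := mkC { Re : R ; Im : R }.

Definition RtoC (a : R) : Cx := mkC a 0.
Definition Ci : Cx := mkC 0 1.
Definition Cadd (z w : Cx) : Cx := mkC (Re z + Re w) (Im z + Im w).
Definition Copp (z : Cx) : Cx := mkC (- Re z) (- Im z).
Definition Csub (z w : Cx) : Cx := Cadd z (Copp w).
Definition Cmul (z w : Cx) : Cx :=
  mkC (Re z * Re w - Im z * Im w) (Re z * Im w + Im z * Re w).
Definition Cinv (z : Cx) : Cx :=
  mkC (Re z / (Re z ^ 2 + Im z ^ 2)) (- Im z / (Re z ^ 2 + Im z ^ 2)).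
Definition Cdiv (z w : Cx) : Cx := Cmul z (Cinv w).
Definition Cexp (z : Cx) : Cx := mkC (exp (Re z) * cos (Im z)) (exp (Re z) * sin (Im z)).
Definition Cnorm (z : Cx) : R := sqrt (Re z ^ 2 + Im z ^ 2).

Definition Cderiv (f : R -> Cx) (y : R) (l : Cx) : Prop :=
  derivable_pt_lim (fun s => Re (f s)) y (Re l) /\
  derivable_pt_lim (fun s => Im (f s)) y (Im l).

Definition den (z zb : Cx) (w wb : R) (x t : R) : Cx :=
  Cadd (RtoC 1)
    (Cmul (RtoC (w * wb))
       (Cexp (Csub (Cmul (RtoC (-2)) (Cmul Ci (Cmul (Csub zb z) (RtoC x))))
                   (Cmul (RtoC 4) (Cmul Ci (Cmul (Csub (Cmul zb zb) (Cmul z z)) (RtoC t))))))).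

Definition qsol (z zb : Cx) (w wb : R) (x t : R) : Cx :=
  Cdiv
    (Cmul (Cmul (RtoC 2) (Cmul Ci (Csub zb z)))
       (Cmul (RtoC wb)
          (Cexp (Csub (Cmul (RtoC (-2)) (Cmul Ci (Cmul zb (RtoC x))))
                      (Cmul (RtoC 4) (Cmul Ci (Cmul (Cmul zb zb) (RtoC t))))))))
    (den z zb w wb x t).

(* Main.v *)
Require Import Defs.
From Stdlib Require Import Reals ZArith.
From Stdlib Require Import Lra Lia Field Ring FunctionalExtensionality.
Open Scope R_scope.

Lemma Cx_ext (z w : Cx) : Re z = Re w -> Im z = Im w -> z = w.
Proof. destruct z, w; simpl; intros; subst; reflexivity. Qed.

Lemma Cx_ring : ring_theory (RtoC 0) (RtoC 1) Cadd Cmul Csub Copp (@eq Cx).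
Proof.
  constructor; intros; apply Cx_ext; simpl; ring.
Qed.

Lemma Cnz (z : Cx) : z <> RtoC 0 -> Re z ^ 2 + Im z ^ 2 <> 0.
Proof.
  intros H E; apply H; apply Cx_ext; simpl; nra.
Qed.

Lemma Cx_field : field_theory (RtoC 0) (RtoC 1) Cadd Cmul Csub Copp Cdiv Cinv (@eq Cx).
Proof.
  constructor.
  - exact Cx_ring.
  - intro H. injection H. lra.
  - reflexivity.
  - intros p Hp. apply Cnz in Hp. apply Cx_ext; simpl; field; simpl in Hp; intro; apply Hp; lra.
Qed.

Add Field Cxfield : Cx_field.

Lemma D_eq f x l l' : derivable_pt_lim f x l -> l = l' -> derivable_pt_lim f x l'.
Proof. intros; subst; auto. Qed.
Lemma D_plus f g x a b : derivable_pt_lim f x a -> derivable_pt_lim g x b ->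
  derivable_pt_lim (fun s => f s + g s) x (a + b).
Proof. intros; apply (derivable_pt_lim_plus f g); auto. Qed.
Lemma D_minus f g x a b : derivable_pt_lim f x a -> derivable_pt_lim g x b ->
  derivable_pt_lim (fun s => f s - g s) x (a - b).
Proof. intros; apply (derivable_pt_lim_minus f g); auto. Qed.
Lemma D_mult f g x a b : derivable_pt_lim f x a -> derivable_pt_lim g x b ->
  derivable_pt_lim (fun s => f s * g s) x (a * g x + f x * b).
Proof. intros; apply (derivable_pt_lim_mult f g); auto. Qed.
Lemma D_div f g x a b : derivable_pt_lim f x a -> derivable_pt_lim g x b -> g x <> 0 ->
  derivable_pt_lim (fun s => f s / g s) x ((a * g x - b * f x) / (g x)²).
Proof. intros; apply (derivable_pt_lim_div f g); auto. Qed.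
Lemma D_opp f x a : derivable_pt_lim f x a -> derivable_pt_lim (fun s => - f s) x (- a).
Proof. intros; apply (derivable_pt_lim_opp f); auto. Qed.
Lemma D_const c x : derivable_pt_lim (fun _ => c) x 0.
Proof. apply derivable_pt_lim_const. Qed.
Lemma D_id x : derivable_pt_lim (fun s => s) x 1.
Proof. apply derivable_pt_lim_id. Qed.
Lemma D_exp f x l : derivable_pt_lim f x l -> derivable_pt_lim (fun s => exp (f s)) x (exp (f x) * l).
Proof. intros; apply (derivable_pt_lim_comp f exp); auto. apply derivable_pt_lim_exp. Qed.
Lemma D_cos f x l : derivable_pt_lim f x l -> derivable_pt_lim (fun s => cos (f s)) x (- sin (f x) * l).
Proof. intros; apply (derivable_pt_lim_comp f cos); auto. apply derivable_pt_lim_cos. Qed.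
Lemma D_sin f x l : derivable_pt_lim f x l -> derivable_pt_lim (fun s => sin (f s)) x (cos (f x) * l).
Proof. intros; apply (derivable_pt_lim_comp f sin); auto. apply derivable_pt_lim_sin. Qed.

Lemma Cd_eq f x l l' : Cderiv f x l -> l = l' -> Cderiv f x l'.
Proof. intros; subst; auto. Qed.
Lemma Cd_ext f g x l : (forall s, f s = g s) -> Cderiv f x l -> Cderiv g x l.
Proof. intros H; replace g with f; auto. apply functional_extensionality; auto. Qed.
Lemma Cd_const c x : Cderiv (fun _ => c) x (RtoC 0).
Proof. unfold Cderiv; split; apply D_const. Qed.
Lemma Cd_lin u v x : Cderiv (fun s => Cadd u (Cmul v (RtoC s))) x v.
Proof.
  unfold Cderiv in *; split; simpl.
  - eapply D_eq. apply D_plus. apply D_const. apply D_minus. apply D_mult. apply D_const. apply D_id.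
    apply D_const. cbv beta; ring.
  - eapply D_eq. apply D_plus. apply D_const. apply D_plus. apply D_mult. apply D_const. apply D_const.
    apply D_mult. apply D_const. apply D_id. cbv beta; ring.
Qed.
Lemma Cd_add f g x a b : Cderiv f x a -> Cderiv g x b -> Cderiv (fun s => Cadd (f s) (g s)) x (Cadd a b).
Proof. intros [H1 H2] [H3 H4]; unfold Cderiv in *; split; simpl; apply D_plus; auto. Qed.
Lemma Cd_mul f g x a b : Cderiv f x a -> Cderiv g x b ->
  Cderiv (fun s => Cmul (f s) (g s)) x (Cadd (Cmul a (g x)) (Cmul (f x) b)).
Proof.
  intros [H1 H2] [H3 H4]; unfold Cderiv in *; split; simpl.
  - eapply D_eq. apply D_minus; apply D_mult; eauto. simpl; ring.
  - eapply D_eq. apply D_plus; apply D_mult; eauto. simpl; ring.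
Qed.
Lemma Cd_exp f x l : Cderiv f x l -> Cderiv (fun s => Cexp (f s)) x (Cmul (Cexp (f x)) l).
Proof.
  intros [H1 H2]; unfold Cderiv in *; split; simpl.
  - eapply D_eq. apply D_mult. apply D_exp; eauto. apply D_cos; eauto. simpl; ring.
  - eapply D_eq. apply D_mult. apply D_exp; eauto. apply D_sin; eauto. simpl; ring.
Qed.
Lemma Cd_inv f x l : Cderiv f x l -> f x <> RtoC 0 ->
  Cderiv (fun s => Cinv (f s)) x (Copp (Cmul l (Cmul (Cinv (f x)) (Cinv (f x))))).
Proof.
  unfold Cderiv in *; intros [H1 H2] Hn. pose proof (Cnz _ Hn) as N.
  assert (Dn : derivable_pt_lim (fun s => Re (f s) ^ 2 + Im (f s) ^ 2) x
     (2 * Re (f x) * Re l + 2 * Im (f x) * Im l)).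
  { eapply D_eq. apply D_plus; apply D_mult; try apply D_mult; eauto; apply D_const.
    simpl; ring. }
  unfold Cderiv in *; split; simpl.
  - eapply D_eq. apply D_div; eauto. simpl. unfold Rsqr. field. intro; apply N; lra.
  - eapply D_eq. apply D_div; eauto. apply D_opp; eauto. simpl. unfold Rsqr. field. intro; apply N; lra.
Qed.

Definition ee u a (s : R) := Cexp (Cadd u (Cmul a (RtoC s))).
Definition DD C u b s := Cadd (RtoC 1) (Cmul C (ee u b s)).

Lemma Cmul_nz p q : p <> RtoC 0 -> q <> RtoC 0 -> Cmul p q <> RtoC 0.
Proof.
  intros Hp Hq E. apply Hq.
  replace q with (Cmul (Cinv p) (Cmul p q)) by (field; auto).
  rewrite E. ring.
Qed.

Lemma qd1 K u a u' b C y : DD C u' b y <> RtoC 0 ->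
  Cderiv (fun s => Cmul K (Cmul (ee u a s) (Cinv (DD C u' b s)))) y
   (Cmul K (Cmul (ee u a y) (Cdiv (Cadd a (Cmul C (Cmul (Csub a b) (ee u' b y))))
       (Cmul (DD C u' b y) (DD C u' b y))))).
Proof.
  intros H. unfold DD, ee in *.
  eapply Cd_eq.
  { apply Cd_mul. apply Cd_const. apply Cd_mul. apply Cd_exp; apply Cd_lin.
    apply Cd_inv; auto. apply Cd_add. apply Cd_const. apply Cd_mul. apply Cd_const.
    apply Cd_exp; apply Cd_lin. }
  cbv beta. field. auto.
Qed.

Lemma qd2 K u a u' b C y : DD C u' b y <> RtoC 0 ->
  Cderiv (fun s => Cmul K (Cmul (ee u a s) (Cdiv (Cadd a (Cmul C (Cmul (Csub a b) (ee u' b s))))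
       (Cmul (DD C u' b s) (DD C u' b s))))) y
   (Cmul K (Cmul (ee u a y) (Cdiv
      (Csub (Cmul (Cadd (Cmul a (Cadd a (Cmul C (Cmul (Csub a b) (ee u' b y)))))
                        (Cmul C (Cmul (Csub a b) (Cmul b (ee u' b y))))) (DD C u' b y))
            (Cmul (Cadd (RtoC 1) (RtoC 1)) (Cmul C (Cmul b (Cmul (ee u' b y)
                 (Cadd a (Cmul C (Cmul (Csub a b) (ee u' b y)))))))))
      (Cmul (DD C u' b y) (Cmul (DD C u' b y) (DD C u' b y)))))).
Proof.
  intros H. unfold DD, ee, Cdiv in *.
  eapply Cd_eq.
  { apply Cd_mul. apply Cd_const. apply Cd_mul. apply Cd_exp; apply Cd_lin.
    apply Cd_mul. apply Cd_add. apply Cd_const. apply Cd_mul. apply Cd_const. apply Cd_mul.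
    apply Cd_const. apply Cd_exp; apply Cd_lin.
    apply Cd_inv. apply Cd_mul; (apply Cd_add; [apply Cd_const| apply Cd_mul; [apply Cd_const|apply Cd_exp; apply Cd_lin]]).
    apply Cmul_nz; auto. }
  cbv beta. field. auto.
Qed.

Lemma final_id (a b e g wbv C : Cx) : e <> RtoC 0 -> g <> RtoC 0 ->
  Cadd (RtoC 1) (Cmul C g) <> RtoC 0 ->
  (C = RtoC 1 \/ C = Copp (RtoC 1)) -> (wbv = RtoC 1 \/ wbv = Copp (RtoC 1)) ->
  let K := Copp (Cmul b wbv) in
  let D := Cadd (RtoC 1) (Cmul C g) in
  Cadd (Cadd
    (Cmul K (Cmul e (Cdiv (Cadd (Copp (Cmul a a)) (Cmul C (Cmul (Csub (Copp (Cmul a a)) (Csub (Cmul b b) (Cmul (Cadd (RtoC 1) (RtoC 1)) (Cmul a b)))) g))) (Cmul D D))))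
    (Cmul K (Cmul e (Cdiv
      (Csub (Cmul (Cadd (Cmul a (Cadd a (Cmul C (Cmul (Csub a b) g))))
                        (Cmul C (Cmul (Csub a b) (Cmul b g)))) D)
            (Cmul (Cadd (RtoC 1) (RtoC 1)) (Cmul C (Cmul b (Cmul g
                 (Cadd a (Cmul C (Cmul (Csub a b) g))))))))
      (Cmul D (Cmul D D))))))
   (Cmul (Cadd (RtoC 1) (RtoC 1)) (Cmul (Cmul (Cmul K (Cmul e (Cinv D))) (Cmul K (Cmul e (Cinv D))))
        (Cmul K (Cmul (Cinv e) (Cinv (Cadd (RtoC 1) (Cmul C (Cinv g))))))))
  = RtoC 0.
Proof.
  intros He Hg HD HC Hw K D. subst K D.
  destruct HC as [-> | ->]; destruct Hw as [-> | ->].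
  all: field; repeat split; auto; intro E; apply HD; unfold Cadd, Cmul, Copp, RtoC in *; simpl in *; injection E; intros; apply Cx_ext; simpl; lra.
Qed.

Lemma final_id2 (I aT bT a b K e g wbv C : Cx) : e <> RtoC 0 -> g <> RtoC 0 ->
  Cadd (RtoC 1) (Cmul C g) <> RtoC 0 ->
  (C = RtoC 1 \/ C = Copp (RtoC 1)) -> (wbv = RtoC 1 \/ wbv = Copp (RtoC 1)) ->
  Cmul I aT = Copp (Cmul a a) ->
  Cmul I bT = Csub (Cmul b b) (Cmul (Cadd (RtoC 1) (RtoC 1)) (Cmul a b)) ->
  K = Copp (Cmul b wbv) ->
  let D := Cadd (RtoC 1) (Cmul C g) in
  Cadd (Cadd
    (Cmul I (Cmul K (Cmul e (Cdiv (Cadd aT (Cmul C (Cmul (Csub aT bT) g))) (Cmul D D)))))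
    (Cmul K (Cmul e (Cdiv
      (Csub (Cmul (Cadd (Cmul a (Cadd a (Cmul C (Cmul (Csub a b) g))))
                        (Cmul C (Cmul (Csub a b) (Cmul b g)))) D)
            (Cmul (Cadd (RtoC 1) (RtoC 1)) (Cmul C (Cmul b (Cmul g
                 (Cadd a (Cmul C (Cmul (Csub a b) g))))))))
      (Cmul D (Cmul D D))))))
   (Cmul (RtoC 2) (Cmul (Cmul (Cmul K (Cmul e (Cinv D))) (Cmul K (Cmul e (Cinv D))))
        (Cmul K (Cmul (Cinv e) (Cinv (Cadd (RtoC 1) (Cmul C (Cinv g))))))))
  = RtoC 0.
Proof.
  intros He Hg HD HC Hw H1 H2 HK D.
  assert (E2 : RtoC 2 = Cadd (RtoC 1) (RtoC 1)) by (apply Cx_ext; simpl; lra).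
  replace (Cmul I (Cmul K (Cmul e (Cdiv (Cadd aT (Cmul C (Cmul (Csub aT bT) g))) (Cmul D D)))))
   with (Cmul K (Cmul e (Cdiv (Cadd (Cmul I aT) (Cmul C (Cmul (Csub (Cmul I aT) (Cmul I bT)) g))) (Cmul D D))))
   by (subst D; field; auto).
  rewrite H1, H2, HK, E2. subst D. apply final_id; auto.
Qed.

Definition thg (v v2 : Cx) (x t : R) : Cx :=
  Csub (Cmul (RtoC (-2)) (Cmul Ci (Cmul v (RtoC x)))) (Cmul (RtoC 4) (Cmul Ci (Cmul v2 (RtoC t)))).
Definition uX v2 t := Copp (Cmul (RtoC 4) (Cmul Ci (Cmul v2 (RtoC t)))).
Definition aXg v := Cmul (RtoC (-2)) (Cmul Ci v).
Definition uT v x := Cmul (RtoC (-2)) (Cmul Ci (Cmul v (RtoC x))).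
Definition aTg v2 := Copp (Cmul (RtoC 4) (Cmul Ci v2)).

Lemma thg_x v v2 y t : thg v v2 y t = Cadd (uX v2 t) (Cmul (aXg v) (RtoC y)).
Proof. unfold thg, uX, aXg. ring. Qed.
Lemma thg_t v v2 x s : thg v v2 x s = Cadd (uT v x) (Cmul (aTg v2) (RtoC s)).
Proof. unfold thg, uT, aTg. ring. Qed.
Lemma RtoC_opp r : RtoC (- r) = Copp (RtoC r).
Proof. apply Cx_ext; simpl; lra. Qed.
Lemma thg_neg v v2 x t : thg v v2 (- x) (- t) = Copp (thg v v2 x t).
Proof. unfold thg. rewrite !RtoC_opp. ring. Qed.

Lemma Cexp_nz u : Cexp u <> RtoC 0.
Proof.
  intro E. unfold Cexp in E. injection E. intros H1 H2.
  pose proof (exp_pos (Re u)). pose proof (sin2_cos2 (Im u)). unfold Rsqr in *.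
  assert (cos (Im u) = 0) by (apply (Rmult_eq_reg_l (exp (Re u))); lra).
  assert (sin (Im u) = 0) by (apply (Rmult_eq_reg_l (exp (Re u))); lra).
  nra.
Qed.
Lemma Cexp_opp u : Cexp (Copp u) = Cinv (Cexp u).
Proof.
  assert (H : Cmul (Cexp (Copp u)) (Cexp u) = RtoC 1).
  { apply Cx_ext; simpl; rewrite cos_neg, sin_neg.
    - replace (exp (- Re u) * cos (Im u) * (exp (Re u) * cos (Im u)) -
               exp (- Re u) * - sin (Im u) * (exp (Re u) * sin (Im u)))
        with ((exp (- Re u) * exp (Re u)) * (sin (Im u) ^2 + cos (Im u)^2)) by ring.
      rewrite <- exp_plus. replace (- Re u + Re u) with 0 by ring. rewrite exp_0.
      pose proof (sin2_cos2 (Im u)). unfold Rsqr in *. nra.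
    - ring. }
  pose proof (Cexp_nz u).
  replace (Cexp (Copp u)) with (Cmul (Cmul (Cexp (Copp u)) (Cexp u)) (Cinv (Cexp u))) by (field; auto).
  rewrite H. field. auto.
Qed.

Lemma ee_x v v2 y t : ee (uX v2 t) (aXg v) y = Cexp (thg v v2 y t).
Proof. unfold ee; rewrite thg_x; reflexivity. Qed.
Lemma ee_t v v2 x s : ee (uT v x) (aTg v2) s = Cexp (thg v v2 x s).
Proof. unfold ee; rewrite thg_t; reflexivity. Qed.

Section A.
Variables (z zb : Cx) (w wb : R).
Let Dl := Csub zb z.
Let Dl2 := Csub (Cmul zb zb) (Cmul z z).
Let K := Cmul (Cmul (RtoC 2) (Cmul Ci Dl)) (RtoC wb).
Let C := RtoC (w * wb).

Lemma q_form x t : qsol z zb w wb x t =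
  Cmul K (Cmul (Cexp (thg zb (Cmul zb zb) x t)) (Cinv (Cadd (RtoC 1) (Cmul C (Cexp (thg Dl Dl2 x t)))))).
Proof. unfold qsol, den, Cdiv, thg, K, C, Dl, Dl2. ring. Qed.

Lemma den_form x t : den z zb w wb x t = Cadd (RtoC 1) (Cmul C (Cexp (thg Dl Dl2 x t))).
Proof. reflexivity. Qed.

Definition Qx' (x t : R) : Cx :=
  Cmul K (Cmul (ee (uX (Cmul zb zb) t) (aXg zb) x)
    (Cdiv (Cadd (aXg zb) (Cmul C (Cmul (Csub (aXg zb) (aXg Dl)) (ee (uX Dl2 t) (aXg Dl) x))))
          (Cmul (DD C (uX Dl2 t) (aXg Dl) x) (DD C (uX Dl2 t) (aXg Dl) x)))).

Lemma partA (hw : w = 1 \/ w = -1) (hwb : wb = 1 \/ wb = -1) :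
  (exists Qx : R -> R -> Cx,
     (forall x t, den z zb w wb x t <> RtoC 0 ->
        Cderiv (fun y => qsol z zb w wb y t) x (Qx x t)) /\
     (forall x t, den z zb w wb x t <> RtoC 0 ->
        exists qt qxx : Cx,
          Cderiv (fun s => qsol z zb w wb x s) t qt /\
          Cderiv (fun y => Qx y t) x qxx /\
          Cadd (Cadd (Cmul Ci qt) qxx)
               (Cmul (RtoC 2) (Cmul (Cmul (qsol z zb w wb x t) (qsol z zb w wb x t))
                                    (qsol z zb w wb (- x) (- t)))) = RtoC 0)).
Proof.
  assert (HDD : forall x t, den z zb w wb x t = DD C (uX Dl2 t) (aXg Dl) x).
  { intros. rewrite den_form. unfold DD. rewrite ee_x. reflexivity. }
  assert (HDDt : forall x t, den z zb w wb x t = DD C (uT Dl x) (aTg Dl2) t).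
  { intros. rewrite den_form. unfold DD. rewrite ee_t. reflexivity. }
  exists Qx'. split.
  - intros x t H.
    apply (Cd_ext (fun s => Cmul K (Cmul (ee (uX (Cmul zb zb) t) (aXg zb) s) (Cinv (DD C (uX Dl2 t) (aXg Dl) s))))).
    + intro s. unfold DD. rewrite !ee_x, q_form. reflexivity.
    + unfold Qx'. apply qd1. rewrite <- HDD. auto.
  - intros x t H. eexists; eexists. split; [|split].
    + apply (Cd_ext (fun s => Cmul K (Cmul (ee (uT zb x) (aTg (Cmul zb zb)) s) (Cinv (DD C (uT Dl x) (aTg Dl2) s))))).
      * intro s. unfold DD. rewrite !ee_t, q_form. reflexivity.
      * apply qd1. rewrite <- HDDt. auto.
    + unfold Qx'. apply qd2. rewrite <- HDD. auto.
    + unfold DD. rewrite !ee_x, !ee_t, !q_form, !thg_neg, !Cexp_opp.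
      apply final_id2 with (wbv := RtoC wb).
      * apply Cexp_nz.
      * apply Cexp_nz.
      * rewrite <- den_form. auto.
      * unfold C. destruct hw as [-> | ->]; destruct hwb as [-> | ->];
          [left|right|right|left]; apply Cx_ext; simpl; lra.
      * destruct hwb as [-> | ->]; [left|right]; apply Cx_ext; simpl; lra.
      * unfold aTg, aXg; apply Cx_ext; simpl; ring.
      * unfold aTg, aXg, Dl2, Dl; apply Cx_ext; simpl; ring.
      * unfold K, aXg, Dl; apply Cx_ext; simpl; ring.
Qed.
End A.

Lemma cos_perZ x k : cos (x + 2 * IZR k * PI) = cos x.
Proof.
  destruct (Z_le_gt_dec 0 k) as [H|H].
  - destruct (Z_of_nat_complete k H) as [n ->]. rewrite <- INR_IZR_INZ. apply cos_period.
  - assert (H' : (0 <= - k)%Z) by lia.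
    destruct (Z_of_nat_complete (-k) H') as [n Hn].
    replace k with (- Z.of_nat n)%Z by lia. rewrite opp_IZR, <- INR_IZR_INZ.
    rewrite <- (cos_period (x + 2 * - INR n * PI) n). f_equal. ring.
Qed.
Lemma sin_perZ x k : sin (x + 2 * IZR k * PI) = sin x.
Proof.
  destruct (Z_le_gt_dec 0 k) as [H|H].
  - destruct (Z_of_nat_complete k H) as [n ->]. rewrite <- INR_IZR_INZ. apply sin_period.
  - assert (H' : (0 <= - k)%Z) by lia.
    destruct (Z_of_nat_complete (-k) H') as [n Hn].
    replace k with (- Z.of_nat n)%Z by lia. rewrite opp_IZR, <- INR_IZR_INZ.
    rewrite <- (sin_period (x + 2 * - INR n * PI) n). f_equal. ring.
Qed.

Lemma sin0_of_cos r : (cos r = 1 \/ cos r = -1) -> exists m : Z, r = IZR m * PI.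
Proof.
  intro H. apply sin_eq_0_0. pose proof (sin2_cos2 r). unfold Rsqr in *.
  destruct H as [H|H]; rewrite H in *; nra.
Qed.

Lemma trig1 r : (cos r = -1 /\ sin r = 0) <-> exists k : Z, r = PI + 2 * IZR k * PI.
Proof.
  split.
  - intros [Hc Hs]. destruct (sin0_of_cos r (or_intror Hc)) as [m Hm].
    destruct (Z.Even_or_Odd m) as [[j Hj]|[j Hj]]; subst m.
    + exfalso. rewrite mult_IZR in Hm.
      assert (cos r = 1). { rewrite Hm. replace (IZR 2 * IZR j * PI) with (0 + 2 * IZR j * PI) by ring.
        rewrite cos_perZ. apply cos_0. }
      lra.
    + exists j. rewrite Hm, plus_IZR, mult_IZR. ring.
  - intros [k ->]. rewrite cos_perZ, sin_perZ. split; [apply cos_PI | apply sin_PI].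
Qed.

Lemma trig2 r : cos r = 1 <-> exists k : Z, r = 0 + 2 * IZR k * PI.
Proof.
  split.
  - intros Hc. destruct (sin0_of_cos r (or_introl Hc)) as [m Hm].
    destruct (Z.Even_or_Odd m) as [[j Hj]|[j Hj]]; subst m.
    + exists j. rewrite Hm, mult_IZR. ring.
    + exfalso. rewrite plus_IZR, mult_IZR in Hm.
      assert (cos r = -1). { rewrite Hm. replace ((IZR 2 * IZR j + IZR 1) * PI) with (PI + 2 * IZR j * PI) by ring.
        rewrite cos_perZ. apply cos_PI. }
      lra.
  - intros [k ->]. rewrite cos_perZ. apply cos_0.
Qed.

Lemma scaleZ g c t : g <> 0 ->
  (exists k : Z, g * t = c + 2 * IZR k * PI) <-> exists k : Z, t = c / g + IZR k * (2 * PI / Rabs g).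
Proof.
  intro hg. destruct (Rcase_abs g) as [Hn|Hp].
  - rewrite Rabs_left by auto. split.
    + intros [k Hk]. exists (- k)%Z. rewrite opp_IZR.
      apply (Rmult_eq_reg_l g); auto. rewrite Hk. field. auto.
    + intros [k Hk]. exists (- k)%Z. rewrite opp_IZR, Hk. field. auto.
  - rewrite Rabs_right by auto. split.
    + intros [k Hk]. exists k.
      apply (Rmult_eq_reg_l g); auto. rewrite Hk. field. auto.
    + intros [k Hk]. exists k. rewrite Hk. field. auto.
Qed.

Lemma den'_zero c r : Cadd (RtoC 1) (Cmul (RtoC c) (Cexp (Cmul Ci (RtoC r)))) = RtoC 0 <->
  (1 + c * cos r = 0 /\ c * sin r = 0).
Proof.
  replace (Cmul Ci (RtoC r)) with (mkC 0 r) by (apply Cx_ext; simpl; ring).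
  unfold Cexp; simpl; rewrite exp_0. split.
  - intro H. injection H. intros. split; lra.
  - intros [H1 H2]. apply Cx_ext; simpl; lra.
Qed.

Lemma Cnorm_mul u v : Cnorm (Cmul u v) = Cnorm u * Cnorm v.
Proof.
  unfold Cnorm. rewrite <- sqrt_mult by nra. f_equal. simpl. ring.
Qed.
Lemma Cnorm_inv v : v <> RtoC 0 -> Cnorm (Cinv v) = / Cnorm v.
Proof.
  intro H. pose proof (Cnz _ H). unfold Cnorm. rewrite <- sqrt_inv. f_equal. simpl. field. simpl in *. intro; apply H0; lra.
Qed.
Lemma Cnorm_exp u : Cnorm (Cexp u) = exp (Re u).
Proof.
  unfold Cnorm, Cexp. cbn [Re Im]. pose proof (sin2_cos2 (Im u)). unfold Rsqr in *.
  replace ((exp (Re u) * cos (Im u)) ^ 2 + (exp (Re u) * sin (Im u)) ^ 2) with (exp (Re u) ^ 2)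
    by (replace (exp (Re u) ^ 2) with (exp (Re u) ^2 * 1) by ring; rewrite <- H; ring).
  apply sqrt_pow2. left; apply exp_pos.
Qed.
Lemma Cnorm_real r : Cnorm (RtoC r) = Rabs r.
Proof.
  unfold Cnorm, RtoC, Ci; cbn [Re Im]. replace (r ^ 2 + 0 ^ 2) with (r ^ 2) by ring. rewrite <- sqrt_Rsqr_abs. unfold Rsqr. f_equal; ring.
Qed.
Lemma Cnorm_i : Cnorm Ci = 1.
Proof. unfold Cnorm, RtoC, Ci; cbn [Re Im]. replace (0 ^ 2 + 1 ^ 2) with 1 by ring. apply sqrt_1. Qed.

Lemma partC (g c : R) (F : R -> Prop) : g <> 0 -> (c = 1 \/ c = -1) ->
  (forall t, F t <-> (1 + c * cos (g * t) = 0 /\ c * sin (g * t) = 0)) ->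
  exists t0, F t0 /\ forall t, F t <-> exists k : Z, t = t0 + IZR k * (2 * PI / Rabs g).
Proof.
  intros hg hc HF.
  assert (Hc0 : exists c0, forall t, (1 + c * cos (g * t) = 0 /\ c * sin (g * t) = 0) <->
                 exists k : Z, g * t = c0 + 2 * IZR k * PI).
  { destruct hc as [-> | ->].
    - exists PI. intro t. rewrite <- trig1. split; intros [H1 H2]; split; lra.
    - exists 0. intro t. rewrite <- trig2. split.
      + intros [H1 H2]; lra.
      + intro H. split; [lra|]. destruct (proj1 (trig2 _) H) as [k Hk]. rewrite Hk, sin_perZ, sin_0. ring. }
  destruct Hc0 as [c0 Hc0].
  assert (Hall : forall t, F t <-> exists k : Z, t = c0 / g + IZR k * (2 * PI / Rabs g)).
  { intro t. rewrite HF, Hc0. apply scaleZ; auto. }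
  exists (c0 / g). split; auto.
  apply Hall. exists 0%Z. simpl. ring.
Qed.

Theorem mainTheorem5 (z zb : Cx) (w wb : R)
  (hz : 0 < Im z) (hzb : Im zb < 0)
  (hw : w = 1 \/ w = -1) (hwb : wb = 1 \/ wb = -1) :
  (exists Qx : R -> R -> Cx,
     (forall x t, den z zb w wb x t <> RtoC 0 ->
        Cderiv (fun y => qsol z zb w wb y t) x (Qx x t)) /\
     (forall x t, den z zb w wb x t <> RtoC 0 ->
        exists qt qxx : Cx,
          Cderiv (fun s => qsol z zb w wb x s) t qt /\
          Cderiv (fun y => Qx y t) x qxx /\
          Cadd (Cadd (Cmul Ci qt) qxx)
               (Cmul (RtoC 2) (Cmul (Cmul (qsol z zb w wb x t) (qsol z zb w wb x t))
                                    (qsol z zb w wb (- x) (- t)))) = RtoC 0)) /\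
  (let V := -2 * Im (Csub (Cmul zb zb) (Cmul z z)) / Im (Csub zb z) in
   let beta := 2 * V * Im zb + 4 * Im (Cmul zb zb) in
   let gamma := -2 * V * Re (Csub zb z) - 4 * Re (Csub (Cmul zb zb) (Cmul z z)) in
   (forall t : R,
      Cadd (RtoC 1) (Cmul (RtoC (w * wb)) (Cexp (Cmul Ci (RtoC (gamma * t))))) <> RtoC 0 ->
      Cnorm (qsol z zb w wb (V * t) t) =
      2 * Cnorm (Csub zb z) * exp (beta * t) /
      Cnorm (Cadd (RtoC 1) (Cmul (RtoC (w * wb)) (Cexp (Cmul Ci (RtoC (gamma * t))))))) /\
   gamma = 4 * (Cnorm (Csub z zb)) ^ 2 * Im (Cadd z zb) / Im (Csub zb z) /\
   (Im (Cadd z zb) <> 0 ->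
      exists t0 : R,
        den z zb w wb (V * t0) t0 = RtoC 0 /\
        forall t : R, den z zb w wb (V * t) t = RtoC 0 <->
          exists k : Z, t = t0 + IZR k * (2 * PI / Rabs gamma))).
Proof.
  split; [apply partA; auto|].
  intros V beta gamma.
  assert (hD : Im (Csub zb z) <> 0) by (simpl; lra).
  assert (den_V : forall t, den z zb w wb (V * t) t =
     Cadd (RtoC 1) (Cmul (RtoC (w * wb)) (Cexp (Cmul Ci (RtoC (gamma * t)))))).
  { intro t. unfold den. f_equal. f_equal. f_equal. apply Cx_ext.
    - unfold V. simpl. simpl in hD. field. auto.
    - unfold gamma. simpl. ring. }
  assert (gamma_eq : gamma = 4 * (Cnorm (Csub z zb)) ^ 2 * Im (Cadd z zb) / Im (Csub zb z)).
  { unfold Cnorm. rewrite pow2_sqrt by nra. unfold gamma, V. simpl. simpl in hD. field. auto. }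
  split; [|split; [exact gamma_eq|]].
  - intros t Hne. rewrite <- den_V in *.
    unfold qsol at 1. unfold Cdiv. rewrite !Cnorm_mul, Cnorm_inv by auto.
    rewrite !Cnorm_real, Cnorm_i, Cnorm_exp.
    replace (Rabs wb) with 1 by (destruct hwb as [->| ->]; unfold Rabs; destruct Rcase_abs; lra).
    rewrite Rabs_right by lra.
    replace (Re (Csub (Cmul (RtoC (-2)) (Cmul Ci (Cmul zb (RtoC (V * t)))))
               (Cmul (RtoC 4) (Cmul Ci (Cmul (Cmul zb zb) (RtoC t)))))) with (beta * t)
      by (unfold beta; simpl; ring).
    unfold Rdiv. ring.
  - intro hS.
    assert (hN : 0 < Cnorm (Csub z zb)).
    { unfold Cnorm. apply sqrt_lt_R0. simpl. simpl in hD. assert (0 < Im z + - Im zb) by lra. pose proof (Rle_0_sqr (Re z + - Re zb)). unfold Rsqr in *. pose proof (Rmult_lt_0_compat _ _ H H). nra. }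
    assert (hg : gamma <> 0).
    { intro G0. assert (gamma * Im (Csub zb z) = 4 * Cnorm (Csub z zb) ^ 2 * Im (Cadd z zb))
        by (rewrite gamma_eq; field; auto).
      rewrite G0 in H. assert (0 < Cnorm (Csub z zb) ^ 2) by (apply pow_lt; auto).
      apply hS. nra. }
    apply (partC gamma (w * wb)); auto.
    + destruct hw as [->| ->]; destruct hwb as [->| ->]; [left|right|right|left]; ring.
    + intro t. rewrite den_V. apply den'_zero.
Qed.
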